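(* Let $(\Lambda,d)$ be a $k$-graph and let $p\in\mathbb{N}^k$ with $p_i\ge1$ for $1\le i\le k$. Then the coordinate matrices $M^{p\Lambda}_1,\dots,M^{p\Lambda}_k$ of the dual $k$-graph $p\Lambda$ have all entries in $\{0,1\}$.
   Context: A $k$-graph is a pair $(\Lambda,d)$ where $\Lambda$ is a countable category and $d:\Lambda\to\mathbb{N}^k$ is a functor satisfying the factorisation property: if $d(\lambda)=m+n$ then there are unique $\mu\in d^{-1}(m)$, $\nu\in d^{-1}(n)$ with $\lambda=\mu\nu$. Vertices are identified with paths of degree $0$; $r,s$ are codomain and domain; $\Lambda^n:=d^{-1}(n)$; $e_1,\dots,e_k$ are the standard generators of $\mathbb{N}^k$. The coordinate matrices of a $k$-graph $\Gamma$ are the matrices $M^\Gamma_i$ ($1\le i\le k$) indexed by $\Gamma^0\times\Gamma^0$ with $(M^\Gamma_i)_{v,w}:=|\{\lambda\in\Gamma^{e_i}: r(\lambda)=w,\ s(\lambda)=v\}|$. For $d(\lambda)=n$ and $l\le m\le n$, $\lambda(l,m)$ is the unique path of degree $m-l$ with $\lambda=\lambda(0,l)\lambda(l,m)\lambda(m,n)$. The dual $k$-graph $p\Lambda$ has paths $\{\lambda:d(\lambda)\ge p\}$, vertices $\Lambda^p$, range $r_p(\lambda)=\lambda(0,p)$, source $s_p(\lambda)=\lambda(d(\lambda)-p,d(\lambda))$, composition $\lambda\circ_p\mu=\lambda\,\mu(p,d(\mu))$ when $s_p(\lambda)=r_p(\mu)$, degree $d_p(\lambda)=d(\lambda)-p$.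 *)

(* Defs.v *)
From HB Require Import structures.
From mathcomp Require Import all_boot.
From mathcomp Require Import classical_sets.
From Stdlib Require Import ClassicalEpsilon.

Set Implicit Arguments.
Unset Strict Implicit.
Unset Printing Implicit Defensive.
Local Open Scope classical_set_scope.

Definition NN (k : nat) := {ffun 'I_k -> nat}.

Definition zeroNN k : NN k := [ffun => 0%N].
Definition addNN k (m n : NN k) : NN k := [ffun j => (m j + n j)%N].
Definition subNN k (m n : NN k) : NN k := [ffun j => (m j - n j)%N].
Definition leNN k (m n : NN k) : bool := [forall j, m j <= n j].
Definition eNN k (i : 'I_k) : NN k := [ffun j => nat_of_bool (j == i)].

(* A k-graph: a countable category (arrows-only presentation: objects
   are the identity arrows, which are the paths of degree 0) with a
   degree functor d : Lambda -> N^k satisfying the factorisation property. *)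
Record kgraph (k : nat) := KGraph {
  kpath : countType;
  kr : kpath -> kpath;
  ks : kpath -> kpath;
  kcomp : kpath -> kpath -> kpath;         (* composition, meaningful when ks l = kr m *)
  kdeg : kpath -> NN k;
  kr_id : forall l, kr (kr l) = kr l /\ ks (kr l) = kr l;
  ks_id : forall l, kr (ks l) = ks l /\ ks (ks l) = ks l;
  kcomp_r : forall l m, ks l = kr m -> kr (kcomp l m) = kr l;
  kcomp_s : forall l m, ks l = kr m -> ks (kcomp l m) = ks m;
  kcomp_idl : forall l, kcomp (kr l) l = l;
  kcomp_idr : forall l, kcomp l (ks l) = l;
  kcomp_assoc : forall a b c, ks a = kr b -> ks b = kr c ->
      kcomp (kcomp a b) c = kcomp a (kcomp b c);
  kdeg_id : forall l, kdeg (kr l) = zeroNN k;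
  kdeg_comp : forall l m, ks l = kr m ->
      kdeg (kcomp l m) = addNN (kdeg l) (kdeg m);
  kfact : forall l (m n : NN k), kdeg l = addNN m n ->
      exists! mn : kpath * kpath,
        [/\ kdeg mn.1 = m, kdeg mn.2 = n, ks mn.1 = kr mn.2 & l = kcomp mn.1 mn.2]
}.

(* lambda(a,b): the unique path x of degree b - a with
   lambda = lambda(0,a) x lambda(b,d(lambda))  (for a <= b <= d(lambda)). *)
Definition seg k (L : kgraph k) (l : kpath L) (a b : NN k) : kpath L :=
  epsilon (inhabits l) (fun x => exists y z,
    kdeg y = a /\ kdeg x = subNN b a /\ kdeg z = subNN (kdeg l) b /\
    ks y = kr x /\ ks x = kr z /\ l = kcomp (kcomp y x) z).

(* Raw k-graph data needed to define coordinate matrices: a set of paths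
   (carved out of an ambient type), range, source and degree.
   Vertices are the paths of degree 0. *)
Record kdata (k : nat) := KData {
  dT : Type;
  dmem : dT -> Prop;
  dr : dT -> dT;
  ds : dT -> dT;
  ddeg : dT -> NN k
}.

Definition graph_data k (L : kgraph k) : kdata k :=
  @KData k (kpath L) (fun _ => True) (@kr k L) (@ks k L) (@kdeg k L).

Definition dual_data k (L : kgraph k) (p : NN k) : kdata k :=
  @KData k (kpath L)
    (fun l => leNN p (kdeg l))
    (fun l => seg l (zeroNN k) p)
    (fun l => seg l (subNN (kdeg l) p) (kdeg l))
    (fun l => subNN (kdeg l) p).

Definition is_vertex k (G : kdata k) (v : dT G) : Prop :=
  dmem v /\ ddeg v = zeroNN k.
Arguments is_vertex {k} G v.

(* The set whose cardinality is the (v,w) entry of the i-th coordinate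
   matrix M^G_i:  { lambda in G^{e_i} : r(lambda) = w, s(lambda) = v }. *)
Definition coord_set k (G : kdata k) (i : 'I_k) (v w : dT G) : set (dT G) :=
  [set l | [/\ dmem l, ddeg l = eNN i, dr l = w & ds l = v]].
Arguments coord_set {k} G i v w.

Definition entry01 k (G : kdata k) (i : 'I_k) (v w : dT G) : Prop :=
  coord_set G i v w = set0 \/ exists x, coord_set G i v w = [set x].
Arguments entry01 {k} G i v w.

(* Main.v *)
Require Import Defs.
From mathcomp Require Import all_boot classical_sets.
From mathcomp Require Import boolp zify.
From Stdlib Require Import ClassicalEpsilon.

Set Implicit Arguments.
Unset Strict Implicit.
Unset Printing Implicit Defensive.

Section Aux.
Variables (k : nat) (L : kgraph k).

Lemma addNN00 : addNN (zeroNN k) (zeroNN k) = zeroNN k.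
Proof. by apply/ffunP => j; rewrite !ffunE. Qed.

Lemma deg0_id (y : kpath L) : kdeg y = zeroNN k -> kr y = y /\ ks y = y.
Proof.
move=> hy.
have [mn [Pmn U]] := kfact (etrans hy (esym addNN00)).
have [h1 h2] := kr_id y; have [h3 h4] := ks_id y.
have e1 : mn = (kr y, y).
  by apply: U; split => //=; rewrite ?kdeg_id ?kcomp_idl.
have e2 : mn = (y, ks y).
  by apply: U; split => //=; rewrite ?kcomp_idr // -h3 kdeg_id.
by move: e2; rewrite e1 => -[-> <-].
Qed.

Lemma comp0r (x z : kpath L) : kdeg z = zeroNN k -> ks x = kr z -> kcomp x z = x.
Proof. move=> /deg0_id [h1 h2] e; by rewrite -h1 -e kcomp_idr. Qed.

Lemma comp0l (y x : kpath L) : kdeg y = zeroNN k -> ks y = kr x -> kcomp y x = x.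
Proof. move=> /deg0_id [h1 h2] e; by rewrite -h2 e kcomp_idl. Qed.

Definition Pseg (l : kpath L) (a b : NN k) (x : kpath L) := exists y z,
    kdeg y = a /\ kdeg x = subNN b a /\ kdeg z = subNN (kdeg l) b /\
    ks y = kr x /\ ks x = kr z /\ l = kcomp (kcomp y x) z.

Lemma segP (l : kpath L) a b : (exists x, Pseg l a b x) -> Pseg l a b (seg l a b).
Proof. exact: (epsilon_spec (inhabits l) (Pseg l a b)). Qed.


Lemma subNN0 (p : NN k) : subNN p (zeroNN k) = p.
Proof. by apply/ffunP => j; rewrite !ffunE subn0. Qed.

Lemma subNNxx (p : NN k) : subNN p p = zeroNN k.
Proof. by apply/ffunP => j; rewrite !ffunE subnn. Qed.

Lemma subNNK (p x : NN k) : leNN p x -> subNN x (subNN x p) = p.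
Proof.
move=> /forallP H; apply/ffunP => j; rewrite !ffunE; have := H j.
set a := p j; set b := x j; lia.
Qed.

Lemma eq_le_sub0 (p x : NN k) : leNN p x -> subNN x p = zeroNN k -> x = p.
Proof.
move=> /forallP H /ffunP E; apply/ffunP => j; have := H j; have := E j.
rewrite !ffunE; set a := p j; set b := x j; lia.
Qed.

Lemma deg_l (p x : NN k) i : leNN p x -> subNN x p = eNN i -> x = addNN p (eNN i).
Proof.
move=> /forallP H /ffunP E; apply/ffunP => j; have := H j; have := E j.
rewrite !ffunE; set a := p j; set b := x j; lia.
Qed.

Lemma deg_l' (p x : NN k) i : leNN p x -> subNN x p = eNN i -> x = addNN (eNN i) p.
Proof.
move=> /forallP H /ffunP E; apply/ffunP => j; have := H j; have := E j.
rewrite !ffunE; set a := p j; set b := x j; lia.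
Qed.

Lemma addNN_sub (p : NN k) i : (1 <= p i)%N -> addNN (eNN i) (subNN p (eNN i)) = p.
Proof.
move=> h; apply/ffunP => j; rewrite !ffunE.
case: eqP => [->|_] /=; set a := p _; lia.
Qed.

Lemma addNN_sub' (p : NN k) i : (1 <= p i)%N -> p = addNN (subNN p (eNN i)) (eNN i).
Proof.
move=> h; apply/ffunP => j; rewrite !ffunE.
case: eqP => [->|_] /=; set a := p _; lia.
Qed.

End Aux.

Theorem corollary3p9 (k : nat) (L : kgraph k) (p : NN k)
  (hp : forall i : 'I_k, (1 <= p i)%N) :
  forall (i : 'I_k) (v w : kpath L),
    is_vertex (dual_data L p) v -> is_vertex (dual_data L p) w ->
    entry01 (dual_data L p) i v w.
Proof.
move=> i v w [mv dv] [mw dw].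
have degv : kdeg v = p by apply: eq_le_sub0.
have degv' : kdeg v = addNN (subNN p (eNN i)) (eNN i) by rewrite degv -addNN_sub'.
have [[b c'] [[/= db dc' bc' vbc] _]] := kfact degv'.
have key : forall l, coord_set (dual_data L p) i v w l -> l = kcomp w c'.
  move=> l [/= ml dl rl sl].
  have dl1 := deg_l ml dl.
  have dl2 := deg_l' ml dl.
  have [[a c] [[/= da dc ac lac] U]] := kfact dl1.
  have PA : exists x, Pseg l (zeroNN k) p x.
    exists a, (kr a), c; rewrite kdeg_id subNN0 dc -dl.
    have [h1 h2] := kr_id a; rewrite h2 kcomp_idl; by do !split.
  have [y [z [dy [dw' [dz [yw [wz lyz]]]]]]] := segP PA.
  rewrite rl in dy dw' dz yw wz lyz.
  rewrite (comp0l dy yw) in lyz.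
  have PB : exists x, Pseg l (subNN (kdeg l) p) (kdeg l) x.
    have [[g0 b0] [[/= dg0 db0 gb0 lgb0] _]] := kfact dl2.
    exists b0, g0, (ks b0).
    have [h1 h2] := ks_id b0.
    rewrite dg0 -dl db0 subNNK // subNNxx -h1 kdeg_id h1 kcomp_assoc // kcomp_idr -?lgb0; by do !split.
  have [g [z' [dg [_ [dz' [gv [vz lgv]]]]]]] := segP PB.
  rewrite sl in dg dz' gv vz lgv.
  rewrite subNNxx in dz'.
  rewrite comp0r // ?kcomp_s // in lgv.
  rewrite dl in dg.
  have gb : ks g = kr b by rewrite gv vbc kcomp_r.
  have e1 : (a, c) = (w, z).
    apply: U; split => //=; [by rewrite dw' subNN0 | by rewrite dz dl].
  have e2 : (a, c) = (kcomp g b, c').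
    apply: U; split => //=.
    - by rewrite kdeg_comp // dg db addNN_sub.
    - by rewrite kcomp_s.
    - by rewrite kcomp_assoc // -vbc.
  by move: e2; rewrite e1 => -[_ <-].
case: (pselect (exists l, coord_set (dual_data L p) i v w l)) => [[l hl]|nl].
  right; exists l; apply/funext => x; apply/propext; split.
    by move=> hx; rewrite /set1 /= (key _ hx) (key _ hl).
  by move=> ->.
left; apply/funext => x; apply/propext; split => // hx; apply: nl; by exists x.
Qed.
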